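(* Let $H$ and $K$ be finite groups and $G = H \times K$. Then: (i) $\eta(G) \ge \eta(H)\eta(K)$. (ii) If $\gcd(|H|,|K|) = 1$, then $\eta(G) = \eta(H)\eta(K)$. (iii) If $p$ is a prime dividing $|K|$ and $H$ is a nontrivial $p$-group, then $\eta(G) \ge \eta(H)\eta(K) + \eta_p(K) > \eta(H)\eta(K)$, where $\eta_p(K)$ is the number of conjugacy classes of maximal cyclic subgroups of $K$ whose order is divisible by $p$. (iv) If $H$ is nilpotent and a prime $p$ divides both $|H|$ and $|K|$, then $\eta(G) > \eta(K)$. (v) If $H$ and $K$ are both nontrivial $p$-groups for a prime $p$, then $\eta(G) \ge \eta(H)\eta(K) + \eta(H) + \eta(K)$.
   Context: A cyclic subgroup $C$ of a finite group $G$ is maximal cyclic if there is no cyclic subgroup $D$ of $G$ with $C < D$. $\eta(G)$ denotes the number of conjugacy classes of maximal cyclic subgroups of $G$. *)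

(* Defs.v *)
From mathcomp Require Import all_boot all_fingroup all_solvable.
Set Implicit Arguments. Unset Strict Implicit. Unset Printing Implicit Defensive.
Local Open Scope group_scope.

Definition maxcyclic (gT : finGroupType) (G C : {set gT}) : bool :=
  [max C of D | (D \subset G) && cyclic D].

Definition maxcyclics_with (gT : finGroupType) (P : nat -> bool) (G : {set gT})
  : {set {set gT}} := [set C : {set gT} | maxcyclic G C && P #|C|].

Definition eta (gT : finGroupType) (G : {set gT}) : nat :=
  #|[set C :^: G | C in maxcyclics_with predT G]|.

Definition eta_p (gT : finGroupType) (p : nat) (G : {set gT}) : nat :=
  #|[set C :^: G | C in maxcyclics_with (fun n => p %| n) G]|.

(* Main.v *)
Require Import Defs.
From mathcomp Require Import all_boot all_fingroup all_solvable.
Set Implicit Arguments. Unset Strict Implicit.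
Local Open Scope group_scope.

Section MC.
Variable gT : finGroupType.

Lemma maxcyclic_group (G C : {set gT}) : maxcyclic G C -> group_set C.
Proof. by move/maxsetp/andP=> []. Qed.

Lemma maxcyclic_grp (G C : {set gT}) : maxcyclic G C -> {Cg : {group gT} | C = Cg}.
Proof. by move=> h; exists (Group (maxcyclic_group h)). Qed.

Lemma maxcyclicP (G : {set gT}) (C : {group gT}) :
  reflect ([/\ C \subset G, cyclic C &
     forall D : {group gT}, D \subset G -> cyclic D -> C \subset D -> D :=: C])
   (maxcyclic G C).
Proof.
apply: (iffP maxgroupP).
  by case=> /andP[h1 h2] h3; split=> // D s c; apply: h3; rewrite s c.
by case=> h1 h2 h3; split=> [|D /andP[s c]]; [rewrite h1 h2 | exact: h3].
Qed.

Lemma maxcyclic_exists (G : {group gT}) x : x \in G ->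
  {C : {group gT} | maxcyclic G C & x \in C}.
Proof.
move=> xG.
have gP : (<[x]>%G \subset G) && cyclic <[x]>%G.
  by rewrite /= cycle_subG xG cycle_cyclic.
have [C mC sxC] := @maxgroup_exists _ (fun D : {group gT} => (D \subset G) && cyclic D) _ gP.
by exists C => //; rewrite -cycle_subG.
Qed.

Lemma maxcyclicJ1 (G C : {group gT}) g : g \in G -> maxcyclic G C ->
  maxcyclic G (C :^ g).
Proof.
move=> gG /maxcyclicP[sCG cC mC].
apply/(maxcyclicP _ (C :^ g)%G); split.
- by rewrite -(conjGid gG) conjSg.
- by rewrite cyclicJ.
move=> D sDG cD sCD.
have e : (D :^ g^-1)%G :=: C.
  apply: mC; first by rewrite -(conjGid (groupVr gG)) conjSg.
    by rewrite cyclicJ.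
  by rewrite -(conjSg _ _ g) conjsgKV.
by rewrite /= -e conjsgKV.
Qed.

Lemma maxcyclicJ (G C : {group gT}) g : g \in G ->
  maxcyclic G (C :^ g) = maxcyclic G C.
Proof.
move=> gG; apply/idP/idP; last exact: maxcyclicJ1.
move=> h; have := maxcyclicJ1 (C := (C :^ g)%G) (groupVr gG) h.
by rewrite /= conjsgK.
Qed.

Lemma maxcyclic_nt (G C : {group gT}) : G :!=: 1 -> maxcyclic G C -> C :!=: 1.
Proof.
move=> /trivgPn[x xG nx1] /maxcyclicP[_ _ mC]; apply/negP => /eqP C1.
have := mC <[x]>%G; rewrite cycle_subG xG cycle_cyclic C1 sub1G => /(_ isT isT isT).
by move=> e; move: (cycle_id x); rewrite e inE (negPf nx1).
Qed.

Lemma classJ (A G : {set gT}) g : g \in G -> group_set G -> (A :^ g) :^: G = A :^: G.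
Proof.
move=> gG grG; rewrite conjugates_conj.
by have := lcoset_id (G := Group grG) gG => /= ->.
Qed.

Lemma class_repr (A : {set gT}) (G : {group gT}) :
  exists2 g, g \in G & repr (A :^: G) = A :^ g.
Proof.
have : A \in A :^: G by apply/imsetP; exists 1; rewrite ?group1 ?conjsg1.
by move/mem_repr/imsetP => [g gG ->]; exists g.
Qed.

Lemma eta_gt0 (G : {group gT}) : 0 < eta G.
Proof.
have [C mC _] := maxcyclic_exists (group1 G).
apply/card_gt0P; exists (C :^: G); apply/imsetP; exists (C : {set gT}) => //.
by rewrite inE mC.
Qed.


Lemma maxcyclicJs (G : {group gT}) (C : {set gT}) g : g \in G ->
  maxcyclic G (C :^ g) = maxcyclic G C.
Proof.
move=> gG; apply/idP/idP => h; last first.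
  by have [Cg e] := maxcyclic_grp h; subst; apply: maxcyclicJ1.
have [[Cs gCs] /= e] := maxcyclic_grp h.
subst Cs; have := maxcyclicJ1 (C := Group gCs) (groupVr gG); rewrite /= conjsgK; apply; exact: h.
Qed.

End MC.
Section Prod.
Variables gT rT : finGroupType.
Variables (H : {group gT}) (K : {group rT}).

Local Notation p1 := [morphism of fun x : gT * rT => x.1].
Local Notation p2 := [morphism of fun x : gT * rT => x.2].

Lemma pairX (x : gT) (y : rT) n : (x, y) ^+ n = (x ^+ n, y ^+ n).
Proof. by elim: n => [|n IH] //; rewrite !expgS IH. Qed.

Lemma p1J (A : {set gT * rT}) g : p1 @* (A :^ g) = (p1 @* A) :^ g.1.
Proof. by rewrite morphimJ ?inE. Qed.

Lemma p2J (A : {set gT * rT}) g : p2 @* (A :^ g) = (p2 @* A) :^ g.2.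
Proof. by rewrite morphimJ ?inE. Qed.

Lemma p1cycle (g : gT * rT) : p1 @* <[g]> = <[g.1]>.
Proof. by rewrite morphim_cycle ?inE. Qed.

Lemma p2cycle (g : gT * rT) : p2 @* <[g]> = <[g.2]>.
Proof. by rewrite morphim_cycle ?inE. Qed.

Lemma setXJ (A : {set gT}) (B : {set rT}) h k :
  setX (A :^ h) (B :^ k) = (setX A B) :^ (h, k).
Proof.
apply/setP => [[a b]]; rewrite mem_conjg !in_setX !mem_conjg.
by [].
Qed.

Lemma sub_p1 (A : {set gT * rT}) : A \subset setX H K -> p1 @* A \subset H.
Proof. by move/(morphimS p1); rewrite morphim_fstX. Qed.

Lemma sub_p2 (A : {set gT * rT}) : A \subset setX H K -> p2 @* A \subset K.
Proof. by move/(morphimS p2); rewrite morphim_sndX. Qed.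

Lemma sub_setXp (A : {set gT * rT}) : A \subset setX (p1 @* A) (p2 @* A).
Proof.
apply/subsetP => [[a b] ab]; rewrite in_setX.
by rewrite (mem_morphim p1 _ ab) ?inE // (mem_morphim p2 _ ab) ?inE.
Qed.


Lemma core0 (aT bT : finGroupType) (a : aT) (b : bT) n (p : nat) :
  a ^+ n = 1 -> #[b ^+ n] = #[b] -> prime p -> p %| #[b] -> ~~ (p %| #[a]).
Proof.
move=> an bn pp pb; apply/negP => pa.
have pn : p %| n by apply: dvdn_trans pa _; rewrite order_dvdn an.
move: bn; rewrite orderXgcd => e.
have g1 : gcdn #[b] n = 1%N.
  have b0 : 0 < #[b] := order_gt0 b.
  have dg := dvdn_gcdl #[b] n.
  move: (divnK dg); rewrite e => /(congr1 (divn^~ #[b])).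
  rewrite divnn b0 mulKn //.
have : p %| gcdn #[b] n by rewrite dvdn_gcd pb pn.
by rewrite g1 dvdn1 => /eqP p1; rewrite p1 in pp.
Qed.

Lemma setX1_maxcyclic (p : nat) (D : {group rT}) :
  p.-group H -> prime p -> maxcyclic K D -> p %| #|D| ->
  maxcyclic (setX H K) (setX 1 D).
Proof.
move=> pH pp /maxcyclicP[sDK cD mD] pD.
have [d Dd] := cyclicP cD.
apply/(maxcyclicP _ (setX_group 1%G D)); split.
- by rewrite /= setXS ?sub1G.
- by rewrite /= -morphim_pair1g morphim_cyclic.
move=> E sEG cE sDE; have [g Eg] := cyclicP cE.
have dE : (1, d) \in E.
  by apply: (subsetP sDE); rewrite /= in_setX inE eqxx Dd cycle_id.
have e2 : <[g.2]> = D.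
  have /= := mD (p2 @* E)%G (sub_p2 sEG) (morphim_cyclic _ cE).
  rewrite Eg p2cycle; apply.
  by have := morphimS p2 sDE; rewrite morphim_sndX Eg p2cycle.
move: dE; rewrite Eg => /cycleP[n]; case: g Eg e2 => x y Eg /= e2.
rewrite pairX => -[x1 y1].
have ox : ~~ (p %| #[x]).
  apply: (core0 (b := y) (esym x1) _ pp); first by rewrite -y1 /order -Dd e2.
  by rewrite /order e2.
have xH : x \in H.
  by have := subsetP sEG (x, y); rewrite Eg cycle_id in_setX => /(_ isT) /andP[].
have x1' : x = 1.
  apply/eqP; rewrite -order_eq1; apply/eqP.
  apply: (pnat_1 (pi := p)); first exact: mem_p_elt pH xH.
  by rewrite p'natE.
apply/eqP; rewrite eqEsubset -Eg sDE andbT Eg cycle_subG /= in_setX x1' inE eqxx /=.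
by rewrite -e2 cycle_id.
Qed.

Lemma setX1r_maxcyclic (p : nat) (C : {group gT}) :
  p.-group K -> prime p -> maxcyclic H C -> p %| #|C| ->
  maxcyclic (setX H K) (setX C 1).
Proof.
move=> pK pp /maxcyclicP[sCH cC mC] pC.
have [c Cc] := cyclicP cC.
apply/(maxcyclicP _ (setX_group C 1%G)); split.
- by rewrite /= setXS ?sub1G.
- by rewrite /= -morphim_pairg1 morphim_cyclic.
move=> E sEG cE sCE; have [g Eg] := cyclicP cE.
have cE' : (c, 1) \in E.
  by apply: (subsetP sCE); rewrite /= in_setX inE eqxx Cc cycle_id.
have e1 : <[g.1]> = C.
  have /= := mC (p1 @* E)%G (sub_p1 sEG) (morphim_cyclic _ cE).
  rewrite Eg p1cycle; apply.
  by have := morphimS p1 sCE; rewrite morphim_fstX Eg p1cycle.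
move: cE'; rewrite Eg => /cycleP[n]; case: g Eg e1 => x y Eg /= e1.
rewrite pairX => -[x1 y1].
have oy : ~~ (p %| #[y]).
  apply: (core0 (b := x) (esym y1) _ pp); first by rewrite -x1 /order -Cc e1.
  by rewrite /order e1.
have yK : y \in K.
  by have := subsetP sEG (x, y); rewrite Eg cycle_id in_setX => /(_ isT) /andP[].
have y1' : y = 1.
  apply/eqP; rewrite -order_eq1; apply/eqP.
  apply: (pnat_1 (pi := p)); first exact: mem_p_elt pK yK.
  by rewrite p'natE.
apply/eqP; rewrite eqEsubset -Eg sCE andbT Eg cycle_subG /= in_setX y1' inE eqxx andbT.
by rewrite -e1 cycle_id.
Qed.



Definition good (M : {set gT * rT}) :=
  maxcyclic H (p1 @* M) && maxcyclic K (p2 @* M).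

Local Notation G := (setX_group H K).

Lemma goodJ M g : g \in setX H K -> good (M :^ g) = good M.
Proof.
case: g => a b; rewrite in_setX => /andP[aH bK].
by rewrite /good p1J p2J /= maxcyclicJs // maxcyclicJs.
Qed.

Definition Phi (X : {set {set gT * rT}}) :=
  ((p1 @* repr X) :^: H, (p2 @* repr X) :^: K).

Lemma Phi_class M : Phi (M :^: setX H K) = ((p1 @* M) :^: H, (p2 @* M) :^: K).
Proof.
rewrite /Phi; have [g gG] := class_repr M G; rewrite /= => ->.
case: g gG => a b; rewrite in_setX => /andP[aH bK].
by rewrite p1J p2J /= !classJ ?groupP.
Qed.

Lemma good_class M : good (repr (M :^: setX H K)) = good M.
Proof. by have [g gG] := class_repr M G; rewrite /= => ->; rewrite goodJ. Qed.

Definition CG := [set C :^: setX H K | C in maxcyclics_with predT (setX H K)].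
Definition goodC := CG :&: [set X | good (repr X)].
Definition badC := CG :\: [set X | good (repr X)].

Lemma eta_split : eta (setX H K) = (#|goodC| + #|badC|)%N.
Proof. by rewrite /goodC /badC cardsID. Qed.

Lemma part_i : (eta H * eta K <= #|goodC|)%N.
Proof.
rewrite /eta -cardsX.
apply: leq_trans (leq_imset_card Phi _).
apply: subset_leq_card; apply/subsetP => [[a b]].
rewrite in_setX => /andP[/imsetP[C0 + ->] /imsetP[D0 + ->]].
rewrite !inE !andbT => mC mD.
have [C eC] := maxcyclic_grp mC; have [D eD] := maxcyclic_grp mD.
subst C0 D0.
have /maxcyclicP[sCH cC maxC] := mC; have /maxcyclicP[sDK cD maxD] := mD.
have [c Cc] := cyclicP cC; have [d Dd] := cyclicP cD.
have gG : (c, d) \in setX H K.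
  by rewrite in_setX -!cycle_subG -Cc -Dd sCH sDK.
have [M mM gM] := maxcyclic_exists gG.
have /maxcyclicP[sMG cM _] := mM.
have e1 : p1 @* M = C.
  have := maxC (p1 @* M)%G (sub_p1 sMG) (morphim_cyclic _ cM); apply.
  by rewrite Cc cycle_subG (mem_morphim p1 _ gM) ?inE.
have e2 : p2 @* M = D.
  have := maxD (p2 @* M)%G (sub_p2 sMG) (morphim_cyclic _ cM); apply.
  by rewrite Dd cycle_subG (mem_morphim p2 _ gM) ?inE.
apply/imsetP; exists (M :^: setX H K); last by rewrite Phi_class e1 e2.
rewrite !inE good_class /good e1 e2 mC mD andbT andbT.
by apply/imsetP; exists (M : {set _}); rewrite // inE mM.
Qed.


Lemma maxcyclic1F (aT : finGroupType) (A : {group aT}) :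
  A :!=: 1 -> maxcyclic A 1 = false.
Proof.
move=> ntA; apply/negP => m.
by have := maxcyclic_nt (C := 1%G) ntA m; rewrite eqxx.
Qed.

Lemma setX1_bad (p : nat) (D : {group rT}) :
  p.-group H -> H :!=: 1 -> prime p -> maxcyclic K D -> p %| #|D| ->
  let X := setX 1 D :^: setX H K in
  [/\ X \in badC, maxcyclic K (p2 @* repr X) & (Phi X).2 = D :^: K].
Proof.
move=> pH ntH pp mD pD X.
have m1 := setX1_maxcyclic pH pp mD pD.
have e2 : p2 @* setX 1 D = D by rewrite (morphim_sndX 1%G).
have e1 : p1 @* setX 1 D = 1 by rewrite morphim_fstX.
have [g gG] := class_repr (setX 1 D) G; rewrite /= => eX.
have gK : g.2 \in K by case: g {eX} gG => a b; rewrite in_setX => /andP[].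
split.
  rewrite !inE good_class /good e1 maxcyclic1F //=; rewrite /X /CG.
  by apply/imsetP; exists (setX 1 D); rewrite // inE m1.
- by rewrite /X eX p2J e2 maxcyclicJs.
by rewrite /X eX p2J e2 classJ ?groupP.
Qed.

Lemma setX1r_bad (p : nat) (C : {group gT}) :
  p.-group K -> K :!=: 1 -> prime p -> maxcyclic H C -> p %| #|C| ->
  let X := setX C 1 :^: setX H K in
  [/\ X \in badC, ~~ maxcyclic K (p2 @* repr X) & (Phi X).1 = C :^: H].
Proof.
move=> pK ntK pp mC pC X.
have m1 := setX1r_maxcyclic pK pp mC pC.
have e1 : p1 @* setX C 1 = C by rewrite (morphim_fstX _ 1%G).
have e2 : p2 @* setX C 1 = 1 by rewrite morphim_sndX.
have [g gG] := class_repr (setX C 1) G; rewrite /= => eX.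
have gK : g.2 \in K by case: g {eX} gG => a b; rewrite in_setX => /andP[].
split.
- rewrite !inE good_class /good e2 maxcyclic1F // andbF /=; rewrite /X /CG.
  by apply/imsetP; exists (setX C 1); rewrite // inE m1.
- by rewrite /X eX p2J e2 conjs1g maxcyclic1F.
have gH : g.1 \in H by case: g {eX} gG gK => a b; rewrite in_setX => /andP[].
by rewrite /X eX p1J e1 classJ ?groupP.
Qed.


Lemma maxcyclic_pdiv (aT : finGroupType) (p : nat) (A D : {group aT}) :
  p.-group A -> A :!=: 1 -> maxcyclic A D -> p %| #|D|.
Proof.
move=> pA ntA mD.
have ntD := maxcyclic_nt ntA mD.
have /maxcyclicP[sDA _ _] := mD.
by have [] := pgroup_pdiv (pgroupS sDA pA) ntD.
Qed.

Lemma bad_iii (p : nat) : p.-group H -> H :!=: 1 -> prime p ->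
  (eta_p p K <= #|badC|)%N.
Proof.
move=> pH ntH pp; rewrite /eta_p.
apply: leq_trans (leq_imset_card (fun X => (Phi X).2) badC).
apply: subset_leq_card; apply/subsetP => b /imsetP[D0 + ->].
rewrite inE => /andP[mD pD].
have [D eD] := maxcyclic_grp mD; subst D0.
have [bX _ eP] := setX1_bad pH ntH pp mD pD.
by apply/imsetP; exists (setX 1 D :^: setX H K).
Qed.

Lemma bad_v (p : nat) : prime p -> p.-group H -> H :!=: 1 ->
  p.-group K -> K :!=: 1 -> (eta H + eta K <= #|badC|)%N.
Proof.
move=> pp pH ntH pK ntK.
rewrite -(cardsID [set X | maxcyclic K (p2 @* repr X)] badC) addnC.
apply: leq_add.
  apply: leq_trans (leq_imset_card (fun X => (Phi X).2) _).
  apply: subset_leq_card; apply/subsetP => b /imsetP[D0 + ->].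
  rewrite inE => /andP[mD _].
  have [D eD] := maxcyclic_grp mD; subst D0.
  have [bX mX eP] := setX1_bad pH ntH pp mD (maxcyclic_pdiv pK ntK mD).
  by apply/imsetP; exists (setX 1 D :^: setX H K); rewrite // inE bX inE mX.
apply: leq_trans (leq_imset_card (fun X => (Phi X).1) _).
apply: subset_leq_card; apply/subsetP => a /imsetP[C0 + ->].
rewrite inE => /andP[mC _].
have [C eC] := maxcyclic_grp mC; subst C0.
have [bX mX eP] := setX1r_bad pK ntK pp mC (maxcyclic_pdiv pH ntH mC).
by apply/imsetP; exists (setX C 1 :^: setX H K); rewrite // inE bX inE (negPf mX).
Qed.


Lemma bad_iv (p : nat) : nilpotent H -> prime p -> p %| #|H| -> p %| #|K| ->
  (0 < #|badC|)%N.
Proof.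
move=> nH pp pH pK.
have [k kK ok] := Cauchy pp pK.
have [D mD kD] := maxcyclic_exists kK.
have /maxcyclicP[sDK cD maxD] := mD.
have [d Dd] := cyclicP cD.
have dG : (1, d) \in setX H K.
  by rewrite in_setX group1 -cycle_subG -Dd sDK.
have [M mM dM] := maxcyclic_exists (G := G) dG.
have /maxcyclicP[sMG cM _] := mM.
have [g Mg] := cyclicP cM.
have e2 : <[g.2]> = D.
  have sub : D \subset p2 @* M.
    by rewrite Dd cycle_subG (mem_morphim p2 _ dM) ?inE.
  have := maxD (p2 @* M)%G (sub_p2 sMG) (morphim_cyclic _ cM) sub.
  by rewrite /= Mg p2cycle.
move: (dM); rewrite Mg => /cycleP[n]; case: g Mg e2 => x y Mg /= e2.
rewrite pairX => -[x1 y1].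
have pD : p %| #[y] by rewrite /order e2 -ok order_dvdG.
have ox : ~~ (p %| #[x]).
  by apply: (core0 (b := y) (esym x1) _ pp pD); rewrite -y1 /order -Dd e2.
have xH : x \in H.
  by have := subsetP sMG (x, y); rewrite Mg cycle_id in_setX => /(_ isT) /andP[].
have nmx : ~~ maxcyclic H <[x]>.
  have : p \in \pi(H) by rewrite mem_primes pp cardG_gt0 pH.
  rewrite -pi_center_nilpotent // mem_primes => /and3P[_ _ pZ].
  have [z zZ oz] := Cauchy pp pZ.
  have /setIP[zH cHz] := zZ.
  have cxz : commute x z by apply/esym/(centP cHz).
  have co : coprime #[x] #[z] by rewrite coprime_sym oz prime_coprime.
  apply/negP => /maxcyclicP[_ _ mx].
  have e : <[x * z]> = <[x]>.
    apply: (mx <[x * z]>%G); first by rewrite cycle_subG groupM.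
      exact: cycle_cyclic.
    by rewrite /= cycleM // mulg_subl // group1.
  have : z \in <[x]>.
    by rewrite -e cycleM //; apply: (subsetP (mulg_subr _ (group1 _))); exact: cycle_id.
  by move/order_dvdG; rewrite oz (negPf ox).
apply/card_gt0P; exists (M :^: setX H K).
have nM : ~~ maxcyclic H (p1 @* M) by rewrite Mg p1cycle.
rewrite !inE good_class /good (negPf nM) /=.
by apply/imsetP; exists (M : {set _}); rewrite // inE mM.
Qed.


Lemma setX_cyclic (A : {group gT}) (B : {group rT}) :
  cyclic A -> cyclic B -> coprime #|A| #|B| -> cyclic (setX A B).
Proof.
move=> cA cB co; rewrite -setX_prod.
apply: cyclicM.
- by rewrite -morphim_pairg1 morphim_cyclic.
- by rewrite -morphim_pair1g morphim_cyclic.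
- apply/centsP => [[a b]]; rewrite in_setX => /andP[/set1P -> _] [c d].
  rewrite in_setX => /andP[_ /set1P ->].
  by rewrite /commute /mulg /= /mul_pair /= !mulg1 !mul1g.
by rewrite !cardsX !cards1 muln1 mul1n.
Qed.

Section Coprime.
Hypothesis coHK : coprime #|H| #|K|.

Lemma mc_decomp (M : {group gT * rT}) : maxcyclic (setX H K) M ->
  M :=: setX (p1 @* M) (p2 @* M) /\ good M.
Proof.
move=> /maxcyclicP[sMG cM maxM].
have s1 := sub_p1 sMG; have s2 := sub_p2 sMG.
have cXc : forall (A : {group gT}) (B : {group rT}), A \subset H -> B \subset K ->
    cyclic A -> cyclic B -> cyclic (setX A B).
  move=> A B sAH sBK cA cB; apply: setX_cyclic => //.
  exact: coprime_dvdl (cardSg sAH) (coprime_dvdr (cardSg sBK) coHK).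
have eM : M :=: setX (p1 @* M) (p2 @* M).
  apply/esym; apply: (maxM (setX_group (p1 @* M)%G (p2 @* M)%G)).
  - by rewrite /= setXS.
  - by rewrite /= cXc ?morphim_cyclic.
  exact: sub_setXp.
split=> //; apply/andP; split.
  apply/(maxcyclicP _ (p1 @* M)%G); split=> //; first exact: morphim_cyclic.
  move=> C sCH cC sMC.
  have e := maxM (setX_group C (p2 @* M)%G).
  have e' : setX C (p2 @* M) = M.
    apply: e; first by rewrite /= setXS.
      by rewrite /= cXc ?morphim_cyclic.
    by rewrite /= {1}eM setXS.
  by rewrite /= -{1}(morphim_fstX C (p2 @* M)%G) e'.
apply/(maxcyclicP _ (p2 @* M)%G); split=> //; first exact: morphim_cyclic.
move=> D sDK cD sMD.
have e := maxM (setX_group (p1 @* M)%G D).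
have e' : setX (p1 @* M) D = M.
  apply: e; first by rewrite /= setXS.
    by rewrite /= cXc ?morphim_cyclic.
  by rewrite /= {1}eM setXS.
by rewrite /= -{1}(morphim_sndX (p1 @* M)%G D) e'.
Qed.

Lemma coprime_bad : badC = set0.
Proof.
apply/setP => X; rewrite !inE; apply/negP => /andP[ng /imsetP[M0 + eX]].
rewrite inE andbT => mM; have [M eM] := maxcyclic_grp mM; subst M0.
have [_ gM] := mc_decomp mM.
by move: ng; rewrite eX good_class gM.
Qed.

Lemma coprime_good : (#|goodC| <= eta H * eta K)%N.
Proof.
have inj : {in goodC &, injective Phi}.
  move=> X1 X2; rewrite !inE => /andP[/imsetP[M1 + ->] _] /andP[/imsetP[M2 + ->] _].
  rewrite !inE !andbT => m1 m2.
  have [N1 e1] := maxcyclic_grp m1; have [N2 e2] := maxcyclic_grp m2.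
  subst M1 M2.
  rewrite !Phi_class => -[c1 c2].
  have [d1 _] := mc_decomp m1; have [d2 _] := mc_decomp m2.
  have : p1 @* N2 \in p1 @* N1 :^: H.
    by rewrite c1; apply/imsetP; exists 1; rewrite ?group1 ?conjsg1.
  case/imsetP => h hH eh.
  have : p2 @* N2 \in p2 @* N1 :^: K.
    by rewrite c2; apply/imsetP; exists 1; rewrite ?group1 ?conjsg1.
  case/imsetP => k kK ek.
  have -> : (N2 : {set _}) = N1 :^ (h, k).
    by rewrite d2 eh ek setXJ -d1.
  by rewrite classJ ?groupP // in_setX hH kK.
rewrite /eta -cardsX -(card_in_imset inj).
apply: subset_leq_card; apply/subsetP => _ /imsetP[X + ->].
rewrite !inE => /andP[/imsetP[M + ->]].
rewrite inE andbT => mM.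
have [N eN] := maxcyclic_grp mM; subst M.
have [_ /andP[g1 g2]] := mc_decomp mM.
rewrite Phi_class /=.
move=> _; by apply/andP; split; apply/imsetP; [exists (p1 @* N) | exists (p2 @* N)]; rewrite // inE ?g1 ?g2.
Qed.

End Coprime.

End Prod.

Unset Implicit Arguments. Set Strict Implicit.

Theorem lemma2p1 (gT rT : finGroupType) (H : {group gT}) (K : {group rT}) :
  let G := setX H K in
  [/\ (eta H * eta K <= eta G)%N,
      coprime #|H| #|K| -> eta G = (eta H * eta K)%N,
      forall p : nat, prime p -> p %| #|K| -> p.-group H -> H :!=: 1 ->
        (eta H * eta K + eta_p p K <= eta G)%N /\
        (eta H * eta K < eta H * eta K + eta_p p K)%N,
      forall p : nat, nilpotent H -> prime p -> p %| #|H| -> p %| #|K| ->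
        (eta K < eta G)%N &
      forall p : nat, prime p -> p.-group H -> H :!=: 1 ->
        p.-group K -> K :!=: 1 ->
        (eta H * eta K + eta H + eta K <= eta G)%N].
Proof.
move=> G; rewrite /G (@eta_split gT rT H K).
have pi := @part_i gT rT H K.
split.
- exact: leq_trans pi (leq_addr _ _).
- move=> co; rewrite (@coprime_bad gT rT H K co) cards0 addn0.
  by apply/eqP; rewrite eqn_leq (@coprime_good gT rT H K co) pi.
- move=> p pp pK pH ntH; split.
    by apply: leq_add pi (@bad_iii gT rT H K p pH ntH pp).
  rewrite -{1}[(eta H * eta K)%N]addn0 ltn_add2l.
  have [k kK ok] := Cauchy pp pK.
  have [D mD kD] := maxcyclic_exists kK.
  apply/card_gt0P; exists (D :^: K); apply/imsetP; exists (D : {set rT}) => //.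
  by rewrite inE mD -ok order_dvdG.
- move=> p nH pp pH pK.
  have b := @bad_iv gT rT H K p nH pp pH pK.
  rewrite -addn1; apply: leq_add _ b.
  by apply: leq_trans pi; rewrite leq_pmull // eta_gt0.
move=> p pp pH ntH pK ntK; rewrite -addnA.
by apply: leq_add pi (@bad_v gT rT H K p pp pH ntH pK ntK).
Qed.
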